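(* Let $\Phi$ be a real, additive gain graph of order $n$, let $d<n-1$, and let $Q_1,\dots,Q_n\in\mathbb{E}^d$ affinely span $\mathbb{E}^d$ (with $Q_i\neq Q_j$ whenever $i,j$ are adjacent). Then there exist affinely independent points $Q'_1,\dots,Q'_n\in\mathbb{E}^{n-1}$ and a $d$-flat $t$ of $\mathbb{E}^{n-1}$, with $\mathbb{E}^d$ identified isometrically with $t$, such that $\mathcal{H}(\Phi;\mathbf{Q})=\mathcal{H}(\Phi;\mathbf{Q}')^t$.
   Context: A real, additive gain graph $\Phi$ on $\{1,\dots,n\}$: finite graph (multiple edges allowed, every edge with two distinct endpoints) with gains $\phi(e;i,j)\in\mathbb{R}$, $\phi(e;j,i)=-\phi(e;i,j)$. With $\psi_{ij}(P)=d(P,Q_i)^2-d(P,Q_j)^2$, $\mathcal{H}(\Phi;\mathbf{Q})$ consists of the hyperplanes $h(e)=\{P:\psi_{ij}(P)=\phi(e;i,j)\}$ (in the Euclidean space containing the reference points), one per edge $e$ with endpoints $i,j$. For an arrangement $\mathcal{H}$ and affine flat $t$, $\mathcal{H}^t=\{h\cap t:h\in\mathcal{H},\ h\not\supseteq t,\ h\cap t\neq\emptyset\}$. *)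

(* Defs.v *)
From HB Require Import structures.
From mathcomp Require Import all_boot all_order all_algebra.
From mathcomp Require Import boolp classical_sets reals.
Set Implicit Arguments. Unset Strict Implicit. Unset Printing Implicit Defensive.
Import Order.TTheory GRing.Theory Num.Theory.
Local Open Scope ring_scope.
Local Open Scope classical_set_scope.

(* Points of Euclidean space E^m are row vectors 'rV[R]_m. *)

Definition sqdist (R : realType) (m : nat) (x y : 'rV[R]_m) : R :=
  \sum_(k < m) (x ord0 k - y ord0 k) ^+ 2.

Definition psi (R : realType) (m : nat) (Qi Qj P : 'rV[R]_m) : R :=
  sqdist P Qi - sqdist P Qj.

(* Gain graph on 'I_n : finite edge type E, each edge e has an ordered pair of
   endpoints ends e = (i, j) (i <> j) and gain g e = phi(e; i, j);
   phi(e; j, i) = - g e is implicit.  h(e) = {P | psi_ij(P) = phi(e;i,j)}.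
   Note psi_ji = - psi_ij, so h(e) does not depend on the orientation. *)
Definition hyp (R : realType) (n m : nat) (E : Type)
  (ends : E -> 'I_n * 'I_n) (g : E -> R) (Q : 'I_n -> 'rV[R]_m) (e : E)
  : set 'rV[R]_m :=
  [set P | psi (Q (ends e).1) (Q (ends e).2) P = g e].

Definition arrangement (R : realType) (n m : nat) (E : Type)
  (ends : E -> 'I_n * 'I_n) (g : E -> R) (Q : 'I_n -> 'rV[R]_m)
  : set (set 'rV[R]_m) :=
  range (hyp ends g Q).

Definition restrict_arr (T : Type) (H : set (set T)) (t : set T) : set (set T) :=
  [set s | exists2 h, H h & [/\ ~ (t `<=` h), h `&` t !=set0 & s = h `&` t]].

Definition affinely_spanning (R : realType) (n m : nat) (Q : 'I_n -> 'rV[R]_m) :=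
  forall P : 'rV[R]_m, exists lam : 'I_n -> R,
    \sum_i lam i = 1 /\ \sum_i lam i *: Q i = P.

Definition affinely_independent (R : realType) (n m : nat) (Q : 'I_n -> 'rV[R]_m) :=
  forall lam : 'I_n -> R,
    \sum_i lam i = 0 -> \sum_i lam i *: Q i = 0 -> forall i, lam i = 0.

Definition is_flat (R : realType) (k m : nat) (t : set 'rV[R]_m) :=
  exists (A : 'M[R]_(k, m)) (b : 'rV[R]_m),
    row_free A /\ t = [set x *m A + b | x in [set: 'rV[R]_k]].

Definition dist_preserving (R : realType) (k m : nat) (f : 'rV[R]_k -> 'rV[R]_m) :=
  forall x y, sqdist (f x) (f y) = sqdist x y.

(* Main.v *)
Require Import Defs.
From HB Require Import structures.
From mathcomp Require Import all_boot all_order all_algebra.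
From mathcomp Require Import boolp classical_sets reals.
From mathcomp Require Import zify ring lra.
Import Order.TTheory GRing.Theory Num.Theory.
Local Open Scope ring_scope.
Local Open Scope classical_set_scope.

Section Aux.
Variable R : realType.

Lemma sqdist_row_mx d k (a c : 'rV[R]_d) (b e : 'rV[R]_k) :
  sqdist (row_mx a b) (row_mx c e) = sqdist a c + sqdist b e.
Proof.
rewrite /sqdist big_split_ord /=; congr (_ + _); apply: eq_bigr => j _;
  by rewrite ?row_mxEl ?row_mxEr.
Qed.

Lemma sqdist0r k (b : 'rV[R]_k) : sqdist 0 b = \sum_j b 0 j ^+ 2.
Proof. by apply: eq_bigr => j _; rewrite mxE sub0r sqrrN. Qed.

Lemma sqdistxx k (b : 'rV[R]_k) : sqdist b b = 0.
Proof. by rewrite /sqdist big1 // => j _; rewrite subrr expr0n. Qed.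

Lemma sum_sq_eq0 k (b : 'rV[R]_k) : \sum_j b 0 j ^+ 2 = 0 -> b = 0.
Proof.
move=> H; apply/rowP => j; rewrite mxE.
have /(_ j isT) := @psumr_eq0P R 'I_k xpredT (fun i => b 0 i ^+ 2) (fun i _ => sqr_ge0 _) H.
by move/eqP; rewrite sqrf_eq0 => /eqP.
Qed.

Lemma psi_line d (Qi Qj : 'rV[R]_d) (s : R) :
  psi Qi Qj (Qj + s *: (Qi - Qj)) = (1 - 2 * s) * \sum_j (Qi - Qj) 0 j ^+ 2.
Proof.
rewrite /psi /sqdist -sumrB mulr_sumr; apply: eq_bigr => j _.
rewrite !mxE; set a := Qi 0 j; set b := Qj 0 j.
ring.
Qed.

Lemma hyp_exists d (Qi Qj : 'rV[R]_d) (c : R) :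
  Qi != Qj -> exists x, psi Qi Qj x = c.
Proof.
move=> hne; set N := \sum_j (Qi - Qj) 0 j ^+ 2.
have hN : N != 0.
  apply/eqP => /sum_sq_eq0 /eqP; by rewrite subr_eq0 (negbTE hne).
exists (Qj + ((1 - c / N) / 2) *: (Qi - Qj)); rewrite psi_line -/N.
by field.
Qed.

End Aux.
Section Aux2.
Variable R : realType.


Lemma unit_vecs k n (hk : (0 < k)%N) (B : 'M[R]_(k, n)) :
  exists w : 'I_n -> 'rV[R]_k,
    (forall i, \sum_j w i 0 j ^+ 2 = 1) /\
    (forall mu : 'rV_k, \sum_i (mu *m B) 0 i *: w i = 0 ->
        forall i, (mu *m B) 0 i = 0).
Proof.
pose j0 : 'I_k := Ordinal hk.
pose b i : 'rV[R]_k := \row_j B j i.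
pose s i := Num.sqrt (\sum_j b i 0 j ^+ 2).
exists (fun i => if b i == 0 then delta_mx 0 j0 else (s i)^-1 *: b i).
have spos i : b i != 0 -> 0 < s i.
  move=> hb; rewrite sqrtr_gt0 lt_def sumr_ge0 ?andbT => [|j _]; last exact: sqr_ge0.
  by apply/eqP => /sum_sq_eq0 /eqP; rewrite (negbTE hb).
split.
  move=> i; case: ifP => hb.
    rewrite (bigD1 j0) //= big1 => [|j hj]; rewrite mxE.
      by rewrite !eqxx expr1n addr0.
    by rewrite (negbTE hj) andbF expr0n.
  have hs := spos i (negbT hb).
  under eq_bigr => j _ do rewrite mxE exprMn.
  rewrite -mulr_sumr.
  rewrite -[X in _ * X](@sqr_sqrtr _ (\sum_j b i 0 j ^+ 2)); last by rewrite sumr_ge0 // => j _; exact: sqr_ge0.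
  by rewrite -/(s i) -exprMn mulVf ?expr1n // gt_eqF.
move=> mu H.
pose lam i := (mu *m B) 0 i.
have lamE i : lam i = \sum_j mu 0 j * b i 0 j.
  by rewrite /lam mxE; apply: eq_bigr => j _; rewrite mxE.
pose term i := lam i * \sum_j mu 0 j *
   (if b i == 0 then delta_mx 0 j0 else (s i)^-1 *: b i) 0 j.
have termE i : term i = if b i == 0 then 0 else (s i)^-1 * lam i ^+ 2.
  rewrite /term; case: ifP => hb.
    by rewrite lamE (eqP hb) big1 ?mul0r // => j _; rewrite mxE mulr0.
  rewrite [in LHS]lamE.
  under [X in _ * X]eq_bigr => j _ do rewrite mxE mulrCA.
  by rewrite -mulr_sumr -lamE; ring.
have lam0 i : b i == 0 -> lam i = 0.
  by move=> hb; rewrite lamE (eqP hb) big1 // => j _; rewrite mxE mulr0.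
have tge0 i : 0 <= term i.
  rewrite termE; case: ifP => hb //.
  by rewrite mulr_ge0 ?sqr_ge0 // invr_ge0 ltW // spos // hb.
have hsum : \sum_i term i = 0.
  rewrite /term.
  under eq_bigr => i _ do rewrite mulr_sumr.
  rewrite exchange_big /=.
  rewrite big1 // => j _.
  have := congr1 (fun M : 'rV[R]_k => mu 0 j * M 0 j) H.
  rewrite mxE mulr0 summxE mulr_sumr => hj; rewrite -[RHS]hj.
  by apply: eq_bigr => i _; rewrite [X in _ = _ * X]mxE /lam; ring.
move=> i.
have := @psumr_eq0P R 'I_n xpredT term (fun i _ => tge0 i) hsum i isT.
rewrite termE; case: ifP => hb; first by move=> _; exact: lam0.
move/eqP; rewrite mulf_eq0 invr_eq0 gt_eqF ?spos ?hb //= sqrf_eq0 => /eqP.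
by [].
Qed.
End Aux2.

Section Aux3.
Variable R : realType.

Lemma indep_construct n d (Q : 'I_n -> 'rV[R]_d) :
  (d.+1 < n)%N -> affinely_spanning Q ->
  exists k, (k = n - (1 + d))%N /\ exists w : 'I_n -> 'rV[R]_k,
    (forall i, \sum_j w i 0 j ^+ 2 = 1) /\
    affinely_independent (fun i => row_mx (Q i) (w i)).
Proof.
move=> hn Hspan.
pose M0 : 'M[R]_(n, 1 + d) := row_mx (const_mx 1) (\matrix_i Q i).
have M0E (lam : 'I_n -> R) : (\row_i lam i) *m M0 =
    row_mx (\row_(j < 1) \sum_i lam i) (\sum_i lam i *: Q i).
  rewrite mul_mx_row; congr row_mx.
    by apply/rowP => j; rewrite !mxE; apply: eq_bigr => i _; rewrite !mxE mulr1.
  by rewrite mulmx_sum_row; apply: eq_bigr => i _; rewrite rowK mxE.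
have full : row_full M0.
  rewrite -sub1mx; apply/row_subP => j.
  set v := row j 1%:M.
  have [lam1 [h1 h1']] := Hspan (rsubmx v).
  have [lam2 [h2 h2']] := Hspan 0.
  pose a := lsubmx v 0 0.
  have <- : (\row_i (lam1 i + (a - 1) * lam2 i)) *m M0 = v.
    rewrite M0E -[RHS]hsubmxK; congr row_mx.
      apply/rowP => j'; rewrite (ord1 j') [LHS]mxE big_split /= -mulr_sumr h1 h2.
      rewrite -/a; ring.
    under eq_bigr => i _ do rewrite scalerDl -scalerA.
    by rewrite big_split /= -scaler_sumr h1' h2' scaler0 addr0.
  exact: submxMl.
have rk : \rank M0 = (1 + d)%N by apply/eqP.
pose K := kermx M0.
have hk : \rank K = (n - (1 + d))%N by rewrite /K mxrank_ker rk.
have hk0 : (0 < \rank K)%N by rewrite hk; lia.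
have [w [hw1 hw2]] := @unit_vecs R _ _ hk0 (row_base K).
exists (\rank K); split => //; exists w; split => //.
move=> lam hs hQ.
have hrow : \sum_i lam i *: row_mx (Q i) (w i) =
    row_mx (\sum_i lam i *: Q i) (\sum_i lam i *: w i).
  rewrite -[LHS]hsubmxK !linear_sum /=; congr row_mx; apply: eq_bigr => i _;
    by rewrite linearZ /= ?row_mxKl ?row_mxKr.
rewrite hrow -row_mx0 in hQ.
have [hQ1 hQ2] := eq_row_mx hQ.
have hrow0 : (\row_(j < 1) \sum_i lam i) = 0 :> 'rV[R]_1.
  by apply/rowP => j; rewrite !mxE hs.
have /submxP [mu hmu] : ((\row_i lam i) <= row_base K)%MS.
  by rewrite eq_row_base sub_kermx M0E hrow0 hQ1 row_mx0.
have := hw2 mu; rewrite -hmu.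
under eq_bigr => i _ do rewrite mxE.
move=> /(_ hQ2) h i; by have := h i; rewrite mxE.
Qed.
End Aux3.

Theorem theorem7p5 (R : realType) (n d : nat) (E : finType)
  (ends : E -> 'I_n * 'I_n) (g : E -> R)
  (Hends : forall e, (ends e).1 != (ends e).2)
  (Q : 'I_n -> 'rV[R]_d)
  (Hd : (d < n.-1)%N)
  (Hspan : affinely_spanning Q)
  (Hadj : forall e, Q (ends e).1 != Q (ends e).2) :
  exists (Q' : 'I_n -> 'rV[R]_(n.-1)) (t : set 'rV[R]_(n.-1))
         (f : 'rV[R]_d -> 'rV[R]_(n.-1)),
    [/\ affinely_independent Q',
        is_flat d t,
        dist_preserving f,
        f @` [set: 'rV[R]_d] = t &
        [set f @` h | h in arrangement ends g Q]
          = restrict_arr (arrangement ends g Q') t].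
Proof.
have hn : (d.+1 < n)%N by lia.
have [k [hk [w [hw1 hind]]]] := @indep_construct R n d Q hn Hspan.
have -> : n.-1 = (d + k)%N by rewrite hk; lia.
pose f := fun x : 'rV[R]_d => row_mx x (0 : 'rV[R]_k).
pose Q' := fun i => row_mx (Q i) (w i).
have psiE i j x : psi (Q' i) (Q' j) (f x) = psi (Q i) (Q j) x.
  by rewrite /psi /f /Q' !sqdist_row_mx !sqdist0r !hw1; ring.
have key e : hyp ends g Q' e `&` (f @` setT) = f @` hyp ends g Q e.
  apply/seteqP; split.
    by move=> y [hy [z _ hz]]; subst y; exists z => //; rewrite /hyp /= -psiE.
  move=> y [z hz <-]; split; last by exists z.
  by rewrite /hyp /= psiE.
have nonempty e : f @` hyp ends g Q e !=set0.
  have [x hx] := @hyp_exists R _ _ _ (g e) (Hadj e).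
  by exists (f x); exists x.
have notsub e : ~ (f @` setT `<=` hyp ends g Q' e).
  have [x hx] := @hyp_exists R _ _ _ (g e + 1) (Hadj e).
  move=> /(_ (f x)) h.
  have : hyp ends g Q' e (f x) by apply: h; exists x.
  rewrite /hyp /= psiE hx => /eqP; rewrite -subr_eq0 addrAC subrr add0r.
  by rewrite oner_eq0.
exists Q', (f @` setT), f; split => //.
- exists (row_mx 1%:M 0), 0; split.
    apply/row_freeP; exists (col_mx 1%:M 0).
    by rewrite mul_row_col mulmx1 mulmx0 addr0.
  apply/seteqP; split => y [x _ <-]; exists x => //;
    by rewrite /f mul_mx_row mulmx1 mulmx0 addr0.
- by move=> x y; rewrite /f sqdist_row_mx sqdistxx addr0.
- apply/seteqP; split.
    move=> s [h [e _ <-] <-].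
    exists (hyp ends g Q' e); first by exists e.
    by split; [exact: notsub | rewrite key; exact: nonempty | rewrite key].
  move=> s [h [e _ <-] [_ _ ->]].
  by exists (hyp ends g Q e); [exists e | rewrite key].
Qed.
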